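(* Under the hypotheses and notation of the following setting, let $0 \le \mathcal{Q}_l \le \mathcal{Q}_u < \mathbf{C}_0(N_0)$ and let $\bar{x}_l$ and $\bar{x}_u$ be the coordinates returned by the hierarchical search procedure on queries $\mathcal{Q}_l$ and $\mathcal{Q}_u$ respectively. Then $\big|\,(\mathbf{C}(\bar{x}_u) - \mathbf{C}(\bar{x}_l)) - (\mathcal{Q}_u - \mathcal{Q}_l)\,\big| < \Delta_{d-1}$. Consequently, if queries $\mathcal{Q}_0 \le \mathcal{Q}_1 \le \cdots$ are equally spaced with spacing $s$ (and all lie in $[0,\mathbf{C}_0(N_0))$), then for any two consecutive partitions $[\bar{x}^{(p)}, \bar{x}^{(p+1)})$ and $[\bar{x}^{(q)}, \bar{x}^{(q+1)})$ the costs $\mathbf{C}(\bar{x}^{(p+1)})-\mathbf{C}(\bar{x}^{(p)})$ and $\mathbf{C}(\bar{x}^{(q+1)})-\mathbf{C}(\bar{x}^{(q)})$ differ by less than $2\Delta_{d-1}$.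
   Context: Setting: $d \ge 1$, positive integers $N_0,\ldots,N_{d-1}$. For each $m$ and each prefix $\bar{x}_m=(x_0,\ldots,x_{m-1})$ with $x_k\in\{0,\ldots,N_k-1\}$, a cost function $\mathbf{C}_m(\cdot\mid\bar{x}_m):\{0,\ldots,N_m\}\to\mathbb{R}_{\ge0}$ with $\mathbf{C}_m(0\mid\bar{x}_m)=0$, monotone ($\mathbf{C}_m(x\mid\bar{x}_m)\le\mathbf{C}_m(x+1\mid\bar{x}_m)$), and hierarchically consistent: for $m<d-1$ and $x_m\in\{0,\ldots,N_m-1\}$, $\mathbf{C}_m(x_m+1\mid\bar{x}_m)=\mathbf{C}_m(x_m\mid\bar{x}_m)+\mathbf{C}_{m+1}(N_{m+1}\mid\bar{x}_m,x_m)$. $\Delta_{d-1}$ is the maximum of $\mathbf{C}_{d-1}(x+1\mid\bar{x}_{d-1})-\mathbf{C}_{d-1}(x\mid\bar{x}_{d-1})$ over all prefixes $\bar{x}_{d-1}$ and $0\le x<N_{d-1}$. For $\bar{x}=(x_0,\ldots,x_{d-1})$, $\mathbf{C}(\bar{x})=\sum_{m=0}^{d-1}\mathbf{C}_m(x_m\mid x_0,\ldots,x_{m-1})$. The hierarchical search procedure on query $\mathcal{Q}$: set $\mathcal{R}_0=\mathcal{Q}$; for $m=0,\ldots,d-1$, let $x_m$ be the largest $x\in\{0,\ldots,N_m-1\}$ with $\mathbf{C}_m(x\mid x_0,\ldots,x_{m-1})\le\mathcal{R}_m$ and set $\mathcal{R}_{m+1}=\mathcal{R}_m-\mathbf{C}_m(x_m\mid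 x_0,\ldots,x_{m-1})$; return $(x_0,\ldots,x_{d-1})$. *)

(* Defs.v *)
From HB Require Import structures.
From mathcomp Require Import all_boot all_order all_algebra.
Set Implicit Arguments. Unset Strict Implicit. Unset Printing Implicit Defensive.
Import Order.TTheory GRing.Theory Num.Theory.
Local Open Scope ring_scope.

(* A cost family: C m p x = C_m(x | p), where p : seq nat is the prefix
   (x_0,...,x_{m-1}).  Values outside the valid domain are irrelevant. *)
Section HierSearch.
Variable R : realFieldType.
Variable d : nat.
Variable N : nat -> nat.
Variable C : nat -> seq nat -> nat -> R.

Definition valid_prefix (m : nat) (p : seq nat) : bool :=
  (size p == m) && [forall k : 'I_m, nth 0%N p k < N k]%N.

Fixpoint prefixes (m : nat) : seq (seq nat) :=
  match m with
  | 0 => [:: [::]]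
  | m'.+1 => [seq rcons p x | p <- prefixes m', x <- iota 0 (N m')]
  end.

(* Delta_{d-1}: maximal one-step increment of the last-level cost
   (all increments are >= 0 by monotonicity, so 0 is a neutral start). *)
Definition Delta : R :=
  \big[Num.max/0]_(p <- prefixes d.-1)
     \big[Num.max/0]_(x < N d.-1) (C d.-1 p x.+1 - C d.-1 p x).

(* largest x in {0,...,N_m - 1} with C_m(x | p) <= r (0 if none) *)
Definition largest_le (m : nat) (p : seq nat) (r : R) : nat :=
  \max_(x < N m | (C m p x <= r)%R) (x : nat).

Fixpoint hsearch_aux (k m : nat) (p : seq nat) (r : R) : seq nat :=
  match k with
  | 0 => p
  | k'.+1 =>
      let x := largest_le m p r in
      hsearch_aux k' m.+1 (rcons p x) (r - C m p x)
  end.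

Definition hsearch (Q : R) : seq nat := hsearch_aux d 0 [::] Q.

Definition Ctot (x : seq nat) : R :=
  \sum_(m < size x) C m (take m x) (nth 0%N x m).

End HierSearch.

(* Main.v *)
Require Import Defs.
From HB Require Import structures.
From mathcomp Require Import all_boot all_order all_algebra.
From mathcomp Require Import ring lra zify.
Import Order.TTheory GRing.Theory Num.Theory.
Local Open Scope ring_scope.
Set Implicit Arguments. Unset Strict Implicit.

Section S.
Variable R : realFieldType.
Variable N : nat -> nat.
Variable C : nat -> seq nat -> nat -> R.

Lemma Ctot_rcons p x : Ctot C (rcons p x) = Ctot C p + C (size p) p x.
Proof.
rewrite /Ctot size_rcons big_ord_recr /=; congr (_ + _).
  apply: eq_bigr => i _.
  by rewrite -cats1 takel_cat ?(ltnW (ltn_ord i)) // nth_cat ltn_ord.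
by rewrite -cats1 take_size_cat // nth_cat ltnn subnn.
Qed.

Lemma valid_rcons m p x : valid_prefix N m p -> (x < N m)%N ->
  valid_prefix N m.+1 (rcons p x).
Proof.
case/andP=> /eqP sp /forallP H hx; apply/andP; split.
  by rewrite size_rcons sp.
apply/forallP=> i; rewrite nth_rcons sp.
have [lt|ge] := ltnP i m; first exact: (H (Ordinal lt)).
have e : nat_of_ord i = m by apply/eqP; rewrite eqn_leq ge -ltnS ltn_ord.
by rewrite e eqxx.
Qed.

Lemma valid_mem m p : valid_prefix N m p -> p \in prefixes N m.
Proof.
elim: m p => [|m IH] p.
  by case/andP=> /eqP /size0nil -> _; rewrite inE.
case/lastP: p => [|p x]; first by case/andP.
case/andP=> /eqP; rewrite size_rcons => -[sp] /forallP H /=.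
apply: allpairs_f.
  apply: IH; apply/andP; split; first by rewrite sp.
  apply/forallP=> i; have := H (widen_ord (leqnSn _) i).
  by rewrite /= nth_rcons sp ltn_ord.
have := H ord_max; rewrite /= nth_rcons sp ltnn eqxx => hx.
by rewrite mem_iota add0n.
Qed.

Lemma le_bigmax_seq (I : eqType) (r : seq I) (F : I -> R) i :
  i \in r -> F i <= \big[Num.max/0]_(j <- r) F j.
Proof.
elim: r => // a r IH; rewrite inE big_cons => /orP [/eqP ->|/IH h].
  by rewrite le_max lexx.
by rewrite le_max h orbT.
Qed.

Lemma Delta_ge d p x : valid_prefix N d.-1 p -> (x < N d.-1)%N ->
  C d.-1 p x.+1 - C d.-1 p x <= Delta d N C.
Proof.
move=> vp hx; rewrite /Delta.
set G := fun q => \big[Num.max/0]_(y < N d.-1) (C d.-1 q y.+1 - C d.-1 q y).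
have h1 := @le_bigmax_seq _ _ G _ (valid_mem vp).
apply: le_trans h1; rewrite /G.
have := @le_bigmax_seq _ _ (fun y : 'I_(N d.-1) => C d.-1 p y.+1 - C d.-1 p y) _
   (mem_index_enum (Ordinal hx)).
by [].
Qed.

Lemma largest_props m p r : (0 < N m)%N -> C m p 0%N <= r ->
  let x := largest_le N C m p r in
  [/\ (x < N m)%N, C m p x <= r &
      forall y, (y < N m)%N -> C m p y <= r -> (y <= x)%N].
Proof.
move=> hN h0 /=; rewrite /largest_le.
have hc : (0 < #|[pred i : 'I_(N m) | (C m p i <= r)%R]|)%N.
  by apply/card_gt0P; exists (Ordinal hN).
have [i0 Ai0 e] := @eq_bigmax_cond _ [pred i : 'I_(N m) | (C m p i <= r)%R] val hc.
split.
- by rewrite e ltn_ord.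
- by rewrite e.
move=> y hy hC.
have := @leq_bigmax_cond _ (fun i : 'I_(N m) => C m p i <= r) val (Ordinal hy) hC.
by [].
Qed.
End S.

Lemma aux (R : realFieldType) (d : nat) (N : nat -> nat)
    (C : nat -> seq nat -> nat -> R)
    (hN : forall m, (m < d)%N -> (0 < N m)%N)
    (hC0 : forall m p, (m < d)%N -> valid_prefix N m p -> C m p 0%N = 0)
    (hChier : forall m p x, (m.+1 < d)%N -> valid_prefix N m p -> (x < N m)%N ->
       C m p x.+1 = C m p x + C m.+1 (rcons p x) (N m.+1)) :
  forall k m p r, (m + k.+1 = d)%N -> valid_prefix N m p -> 0 <= r ->
    r < C m p (N m) ->
    exists rf, Ctot C (hsearch_aux N C k.+1 m p r) = Ctot C p + r - rf
      /\ 0 <= rf /\ rf < Delta d N C.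
Proof.
elim=> [|k IH] m p r hmk vp hr0 hr.
all: have hm : (m < d)%N by rewrite -hmk addnS ltnS leq_addr.
all: have hNm := hN m hm.
all: have h0 : C m p 0%N <= r by rewrite hC0.
all: have [hx hCx hmax] := largest_props hNm h0.
all: have hr1 : r < C m p (largest_le N C m p r).+1.
all: try (case: (ltnP (largest_le N C m p r).+1 (N m)) => h;
   [rewrite ltNge; apply/negP => H; have := hmax _ h H; by rewrite ltnn
   | have -> : (largest_le N C m p r).+1 = N m by apply/eqP; rewrite eqn_leq h hx]; done).
all: have sp : size p = m by case/andP: vp => /eqP.
all: rewrite [hsearch_aux _ _ _ _ _ _]/=.
all: set x := largest_le N C m p r in hx hCx hr1 *.
- exists (r - C m p x); rewrite Ctot_rcons sp.
  have em : m = d.-1 by rewrite -hmk addn1.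
  have hD : C m p x.+1 - C m p x <= Delta d N C.
    by rewrite em; apply: Delta_ge; rewrite -em.
  split; first by ring.
  split; lra.
- have hm1 : (m.+1 < d)%N by rewrite -hmk; lia.
  have a1 : (m.+1 + k.+1 = d)%N by rewrite -hmk; lia.
  have a2 : 0 <= r - C m p x by lra.
  have a3 : r - C m p x < C m.+1 (rcons p x) (N m.+1).
    by move: (hChier m p x hm1 vp hx) hr1 => E; rewrite E; lra.
  have [rf [e [h1 h2]]] := IH m.+1 (rcons p x) (r - C m p x)
    a1 (valid_rcons vp hx) a2 a3.
  exists rf; rewrite e Ctot_rcons sp; split => //; ring.
Qed.

Theorem mainTheorem2 (R : realFieldType) (d : nat) (N : nat -> nat)
    (C : nat -> seq nat -> nat -> R)
    (hd : (1 <= d)%N)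
    (hN : forall m, (m < d)%N -> (0 < N m)%N)
    (hC0 : forall m p, (m < d)%N -> valid_prefix N m p -> C m p 0%N = 0)
    (hCnn : forall m p x, (m < d)%N -> valid_prefix N m p -> (x <= N m)%N ->
       0 <= C m p x)
    (hCmono : forall m p x, (m < d)%N -> valid_prefix N m p -> (x < N m)%N ->
       C m p x <= C m p x.+1)
    (hChier : forall m p x, (m.+1 < d)%N -> valid_prefix N m p -> (x < N m)%N ->
       C m p x.+1 = C m p x + C m.+1 (rcons p x) (N m.+1)) :
  (forall Ql Qu : R, 0 <= Ql -> Ql <= Qu -> Qu < C 0%N [::] (N 0%N) ->
     `| (Ctot C (hsearch d N C Qu) - Ctot C (hsearch d N C Ql)) - (Qu - Ql) |
       < Delta d N C)
  /\
  (forall (Q : nat -> R) (s : R) (n : nat),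
     0 <= s ->
     (forall i, Q i.+1 - Q i = s) ->
     (forall i, (i <= n)%N -> 0 <= Q i /\ Q i < C 0%N [::] (N 0%N)) ->
     forall p q, (p < n)%N -> (q < n)%N ->
     `| (Ctot C (hsearch d N C (Q p.+1)) - Ctot C (hsearch d N C (Q p)))
        - (Ctot C (hsearch d N C (Q q.+1)) - Ctot C (hsearch d N C (Q q))) |
       < 2 * Delta d N C).
Proof.
have [k ek] : exists k, d = k.+1 by exists d.-1; rewrite prednK.
have hs : forall Q, 0 <= Q -> Q < C 0%N [::] (N 0%N) ->
    exists rf, Ctot C (hsearch d N C Q) = Q - rf /\ 0 <= rf /\ rf < Delta d N C.
  move=> Q h1 h2.
  have v0 : valid_prefix N 0 [::].
    by apply/andP; split => //; apply/forallP => -[].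
  have a1 : (0 + k.+1 = d)%N by rewrite ek.
  have [rf [e hrf]] := aux hN hC0 hChier a1 v0 h1 h2.
  exists rf; split => //.
  have -> : hsearch d N C Q = hsearch_aux N C k.+1 0 [::] Q by rewrite /hsearch ek.
  by rewrite e /Ctot big_ord0 add0r.
split.
  move=> Ql Qu h1 h2 h3.
  have [rl [el [l1 l2]]] := hs Ql h1 (le_lt_trans h2 h3).
  have [ru [eu [u1 u2]]] := hs Qu (le_trans h1 h2) h3.
  rewrite el eu ltr_norml; apply/andP; split; lra.
move=> Q s n hs0 hQ hQb p q hp hq.
have get : forall i, (i <= n)%N -> exists rf,
    Ctot C (hsearch d N C (Q i)) = Q i - rf /\ 0 <= rf /\ rf < Delta d N C.
  by move=> i hi; have [h1 h2] := hQb i hi; apply: hs.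
have [a [ea [a1 a2]]] := get p.+1 hp.
have [b [eb [b1 b2]]] := get p (ltnW hp).
have [c [ec [c1 c2]]] := get q.+1 hq.
have [e [ee [e1 e2]]] := get q (ltnW hq).
have sp := hQ p; have sq := hQ q.
rewrite ea eb ec ee ltr_norml; apply/andP; split; lra.
Qed.
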